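(* Let $c>0$ and $A(r)=\frac{1}{1+s/2}r^{1+s/2}$. Then: (i) $d_{\rm DW}(x,\mathbf{x})\ge A(|x-\mathbf{x}|)$ for $x_1\ge0$, and $d_{\rm DW}(x,-\mathbf{x})\ge A(|x+\mathbf{x}|)$ for $x_1\le0$; (ii) $d_{\rm DW}((x_1,0,\dots,0),\mathbf{x})\ge A(|x_1-\tfrac L2|)$ for $x_1\ge0$ and $\ge 2A(\tfrac L2)-A(|\tfrac L2+x_1|)$ for $-\tfrac L2+c\le x_1\le0$; and $d_{\rm DW}((x_1,0,\dots,0),-\mathbf{x})\ge A(|x_1+\tfrac L2|)$ for $x_1\le0$ and $\ge2A(\tfrac L2)-A(|\tfrac L2-x_1|)$ for $0\le x_1\le\tfrac L2-c$; (iii) $d_{\rm DW}((x_1,\dots,x_d),\mathbf{x})\ge2A(\tfrac L2)-A(|\tfrac L2+x_1|)$ for $-\tfrac L2+c\le x_1\le0$, and $d_{\rm DW}((x_1,\dots,x_d),-\mathbf{x})\ge2A(\tfrac L2)-A(|\tfrac L2-x_1|)$ for $0\le x_1\le\tfrac L2-c$.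
   Context: Let $d\ge1$, $s\ge2$, $L>0$, $\mathbf{x}=(L/2,0,\dots,0)\in\mathbb{R}^d$, $V_{\rm DW}(x)=\min\{|x+\mathbf{x}|^s,|x-\mathbf{x}|^s\}$. The double-well Agmon distance is $d_{\rm DW}(x,y)=\inf\{\int_0^1\sqrt{V_{\rm DW}(\gamma(t))}|\gamma'(t)|dt:\gamma\text{ piecewise }C^1,\ \gamma(0)=x,\ \gamma(1)=y\}$. *)

(* Defs.v *)
From Stdlib Require Import Reals Lra.
From Coquelicot Require Import Coquelicot.
Open Scope R_scope.

(* Points of R^d are represented by functions nat -> R; only the
   coordinates 0 .. d-1 are meaningful (coordinate 0 is x_1). *)
Definition pt := nat -> R.

Fixpoint sumsq (d : nat) (v : pt) : R :=
  match d with O => 0 | S k => sumsq k v + (v k) ^ 2 end.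

Definition enorm (d : nat) (v : pt) : R := sqrt (sumsq d v).

Definition padd (u v : pt) : pt := fun i => u i + v i.
Definition psub (u v : pt) : pt := fun i => u i - v i.
Definition popp (u : pt) : pt := fun i => - u i.

Definition rpow (r p : R) : R :=
  if Rlt_dec 0 r then Rpower r p else 0.

Definition xw (L : R) : pt := fun i => if Nat.eqb i 0 then L / 2 else 0.

Definition e1 (x1 : R) : pt := fun i => if Nat.eqb i 0 then x1 else 0.

Definition VDW (d : nat) (s L : R) (x : pt) : R :=
  Rmin (rpow (enorm d (padd x (xw L))) s) (rpow (enorm d (psub x (xw L))) s).

Definition Afun (s r : R) : R := rpow r (1 + s / 2) / (1 + s / 2).

Definition cont_on (a b : R) (f : R -> R) : Prop :=
  forall u, a <= u <= b ->
    filterlim f (within (fun v => a <= v <= b) (locally u)) (locally (f u)).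

Fixpoint psum (n : nat) (f : nat -> R) : R :=
  match n with O => 0 | S m => psum m f + f m end.

(* gamma : [0,1] -> R^d is a piecewise C^1 path from x to y, with partition
   0 = t 0 < t 1 < ... < t n = 1, and Dg k the derivative of gamma on the
   k-th piece (t k, t (k+1)), extended continuously to [t k, t (k+1)]. *)
Definition pw_C1_path (d : nat) (x y : pt) (g : R -> pt)
    (Dg : nat -> R -> pt) (t : nat -> R) (n : nat) : Prop :=
  (forall i, (i < d)%nat -> g 0 i = x i /\ g 1 i = y i) /\
  t O = 0 /\ t n = 1 /\
  (forall k, (k < n)%nat -> t k < t (S k)) /\
  (forall i, (i < d)%nat -> cont_on 0 1 (fun u => g u i)) /\
  (forall k i, (k < n)%nat -> (i < d)%nat ->
     cont_on (t k) (t (S k)) (fun u => Dg k u i) /\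
     forall u, t k < u < t (S k) -> is_derive (fun v => g v i) u (Dg k u i)).

Definition agmon_length (d : nat) (s L : R) (g : R -> pt)
    (Dg : nat -> R -> pt) (t : nat -> R) (n : nat) : R :=
  psum n (fun k => RInt (fun u => sqrt (VDW d s L (g u)) * enorm d (Dg k u))
                        (t k) (t (S k))).

Definition dDW (d : nat) (s L : R) (x y : pt) : Rbar :=
  Glb_Rbar (fun l => exists g Dg t n,
     pw_C1_path d x y g Dg t n /\ l = agmon_length d s L g Dg t n).

(* Main.v *)
Require Import Defs.
From Stdlib Require Import Reals Lra Lia Psatz Classical.
From Coquelicot Require Import Coquelicot.
Open Scope R_scope.

Lemma sumsq_ge0 d v : 0 <= sumsq d v.
Proof. induction d; simpl; [lra|]. nra. Qed.

Lemma sumsq_ext d u v : (forall i, (i < d)%nat -> u i = v i) -> sumsq d u = sumsq d v.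
Proof.
  induction d; intros H; simpl; auto.
  rewrite IHd by (intros; apply H; lia). rewrite H by lia. auto.
Qed.

Lemma enorm_ext d u v : (forall i, (i < d)%nat -> u i = v i) -> enorm d u = enorm d v.
Proof. intros; unfold enorm; rewrite (sumsq_ext d u v); auto. Qed.

Lemma enorm_ge0 d v : 0 <= enorm d v.
Proof. apply sqrt_pos. Qed.

Lemma sumsq_ge_0 d v : (1 <= d)%nat -> (v 0%nat)^2 <= sumsq d v.
Proof.
  induction d; intros H; [lia|].
  destruct d. simpl. lra.
  simpl in *. specialize (IHd ltac:(lia)). nra.
Qed.

Lemma enorm_ge_0 d v : (1 <= d)%nat -> Rabs (v 0%nat) <= enorm d v.
Proof.
  intros H. unfold enorm. rewrite <- sqrt_Rsqr_abs. apply sqrt_le_1_alt.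
  unfold Rsqr. pose proof (sumsq_ge_0 d v H). simpl in H0. lra.
Qed.

Lemma sumsq_only0 d v : (1 <= d)%nat -> (forall i, (1 <= i)%nat -> v i = 0) ->
  sumsq d v = (v 0%nat)^2.
Proof.
  induction d; intros H Hv; [lia|].
  destruct d. simpl. lra.
  simpl. simpl in IHd. rewrite IHd by (auto; lia). rewrite (Hv (S d)) by lia. ring.
Qed.

Lemma enorm_only0 d v : (1 <= d)%nat -> (forall i, (1 <= i)%nat -> v i = 0) ->
  enorm d v = Rabs (v 0%nat).
Proof.
  intros. unfold enorm. rewrite sumsq_only0 by auto. rewrite <- sqrt_Rsqr_abs.
  f_equal. unfold Rsqr. ring.
Qed.

Lemma enorm_zero d v : (forall i, (i < d)%nat -> v i = 0) -> enorm d v = 0.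
Proof.
  intros H. unfold enorm. rewrite (sumsq_ext d v (fun _ => 0)) by auto.
  replace (sumsq d (fun _ => 0)) with 0. apply sqrt_0.
  induction d; simpl; auto. rewrite <- IHd by auto. ring.
Qed.

Fixpoint sabs (d : nat) (v : pt) : R :=
  match d with O => 0 | S k => sabs k v + Rabs (v k) end.

Lemma sabs_ge0 d v : 0 <= sabs d v.
Proof. induction d; simpl; [lra|]. pose proof (Rabs_pos (v d)); lra. Qed.

Lemma enorm_le_sabs d v : enorm d v <= sabs d v.
Proof.
  assert (H : sumsq d v <= (sabs d v)^2).
  { induction d; simpl; [lra|]. pose proof (sabs_ge0 d v). pose proof (Rabs_pos (v d)).
    assert (E : Rabs (v d) ^ 2 = v d ^ 2) by apply pow2_abs. simpl in E. nra. }
  unfold enorm. rewrite <- (sqrt_pow2 (sabs d v)) by apply sabs_ge0.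
  apply sqrt_le_1_alt; auto.
Qed.

Lemma sabs_le d v M : (forall i, (i < d)%nat -> Rabs (v i) <= M) -> sabs d v <= INR d * M.
Proof.
  induction d; intros H; [simpl; lra|].
  rewrite S_INR. simpl sabs. specialize (IHd ltac:(intros; apply H; lia)). specialize (H d ltac:(lia)). lra.
Qed.

Lemma mink2 x1 y1 x2 y2 : 0 <= x1 -> 0 <= x2 ->
  sqrt ((x1+x2)^2 + (y1+y2)^2) <= sqrt (x1^2+y1^2) + sqrt (x2^2+y2^2).
Proof.
  intros H1 H2.
  assert (A1 : 0 <= x1^2+y1^2) by nra. assert (A2 : 0 <= x2^2+y2^2) by nra.
  pose proof (sqrt_pos (x1^2+y1^2)). pose proof (sqrt_pos (x2^2+y2^2)).
  rewrite <- (sqrt_pow2 (sqrt (x1^2+y1^2) + sqrt (x2^2+y2^2))) by lra.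
  apply sqrt_le_1_alt.
  assert (E : (sqrt (x1^2+y1^2) + sqrt (x2^2+y2^2))^2 =
     x1^2+y1^2 + x2^2+y2^2 + 2 * sqrt ((x1^2+y1^2)*(x2^2+y2^2))).
  { rewrite sqrt_mult_alt by auto.
    pose proof (pow2_sqrt _ A1). pose proof (pow2_sqrt _ A2).
    set (a := sqrt (x1^2+y1^2)) in *. set (b := sqrt (x2^2+y2^2)) in *.
    ring_simplify. lra. }
  rewrite E.
  assert (x1*x2+y1*y2 <= sqrt ((x1^2+y1^2)*(x2^2+y2^2))).
  { destruct (Rle_dec (x1*x2+y1*y2) 0). pose proof (sqrt_pos ((x1^2+y1^2)*(x2^2+y2^2))). lra.
    rewrite <- (sqrt_pow2 (x1*x2+y1*y2)) by lra. apply sqrt_le_1_alt.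
    pose proof (pow2_ge_0 (x1*y2 - x2*y1)) as HH. ring_simplify. ring_simplify in HH. lra. }
  nra.
Qed.

Lemma enorm_triangle d u v : enorm d (padd u v) <= enorm d u + enorm d v.
Proof.
  induction d. unfold enorm; simpl. rewrite sqrt_0. lra.
  unfold enorm in *.
  change (sqrt (sumsq d (padd u v) + (padd u v d)^2) <= sqrt (sumsq d u + (u d)^2) + sqrt (sumsq d v + (v d)^2)).
  pose proof (sumsq_ge0 d u). pose proof (sumsq_ge0 d v). pose proof (sumsq_ge0 d (padd u v)).
  pose proof (mink2 (sqrt (sumsq d u)) (u d) (sqrt (sumsq d v)) (v d) (sqrt_pos _) (sqrt_pos _)) as M.
  rewrite !pow2_sqrt in M by auto.
  eapply Rle_trans; [|exact M].
  apply sqrt_le_1_alt. unfold padd at 2.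
  assert (sqrt (sumsq d (padd u v)) ^ 2 <= (sqrt (sumsq d u) + sqrt (sumsq d v)) ^ 2).
  { apply pow_incr; split; [apply sqrt_pos|exact IHd]. }
  rewrite pow2_sqrt in H2 by auto. lra.
Qed.

Lemma enorm_scal d h v : enorm d (fun i => h * v i) = Rabs h * enorm d v.
Proof.
  unfold enorm. replace (sumsq d (fun i => h * v i)) with (h^2 * sumsq d v).
  rewrite sqrt_mult_alt by nra. f_equal. rewrite <- sqrt_Rsqr_abs. unfold Rsqr. f_equal. ring.
  induction d; simpl; [ring|]. rewrite <- IHd. ring.
Qed.

Lemma enorm_psub_sym d u v : enorm d (psub u v) = enorm d (psub v u).
Proof.
  unfold enorm. f_equal. induction d; simpl; auto. rewrite IHd. unfold psub. ring.
Qed.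

Lemma enorm_lip d u v : Rabs (enorm d u - enorm d v) <= enorm d (psub u v).
Proof.
  assert (T1 : enorm d u <= enorm d (psub u v) + enorm d v).
  { rewrite <- (enorm_ext d (padd (psub u v) v) u) by (intros; unfold padd, psub; ring).
    apply enorm_triangle. }
  assert (T2 : enorm d v <= enorm d (psub u v) + enorm d u).
  { rewrite enorm_psub_sym.
    rewrite <- (enorm_ext d (padd (psub v u) u) v) by (intros; unfold padd, psub; ring).
    apply enorm_triangle. }
  apply Rabs_le; lra.
Qed.

Lemma ball_R (x e y : R) : ball x e y <-> Rabs (y - x) < e.
Proof. unfold ball; simpl; unfold AbsRing_ball, abs, minus, plus, opp; simpl. tauto. Qed.

Lemma ed_of_within (D : R -> Prop) f u :
  filterlim f (within D (locally u)) (locally (f u)) ->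
  forall e, 0 < e -> exists del, 0 < del /\ forall v, D v -> Rabs (v - u) < del -> Rabs (f v - f u) < e.
Proof.
  intros H e He.
  assert (Hl : locally (f u) (ball (f u) (mkposreal e He))) by apply locally_ball.
  specialize (H _ Hl). destruct H as [del Hd].
  exists del. split. apply cond_pos. intros v Dv Hv. apply ball_R. apply Hd; [apply ball_R; auto | auto].
Qed.

Lemma rpow_ge0 r p : 0 <= rpow r p.
Proof. unfold rpow. destruct (Rlt_dec 0 r). unfold Rpower. left; apply exp_pos. lra. Qed.

Lemma rpow_pos r p : 0 < r -> rpow r p = Rpower r p.
Proof. intros. unfold rpow. destruct (Rlt_dec 0 r); auto; lra. Qed.

Lemma rpow_npos r p : r <= 0 -> rpow r p = 0.
Proof. intros. unfold rpow. destruct (Rlt_dec 0 r); auto; lra. Qed.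

Lemma rpow_mono u v p : 0 <= u <= v -> 0 <= p -> rpow u p <= rpow v p.
Proof.
  intros H Hp. destruct (Req_dec u 0). subst. rewrite rpow_npos by lra. apply rpow_ge0.
  rewrite !rpow_pos by lra. apply Rle_Rpower_l; auto. lra.
Qed.

Lemma Rpower_1base x : Rpower 1 x = 1.
Proof. unfold Rpower. rewrite ln_1, Rmult_0_r. apply exp_0. Qed.

Lemma rpow_le_id h p : 0 <= h <= 1 -> 1 <= p -> rpow h p <= h.
Proof.
  intros H Hp. destruct (Req_dec h 0). subst. rewrite rpow_npos by lra. lra.
  rewrite rpow_pos by lra.
  replace p with (1 + (p - 1)) by ring. rewrite Rpower_plus, Rpower_1 by lra.
  assert (Rpower h (p-1) <= 1).
  { rewrite <- (Rpower_1base (p-1)) at 2. apply Rle_Rpower_l; lra. }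
  assert (0 < Rpower h (p-1)) by apply exp_pos. nra.
Qed.

Lemma sqrt_rpow w s : 0 <= w -> sqrt (rpow w s) = rpow w (s/2).
Proof.
  intros H. destruct (Req_dec w 0). subst. rewrite !rpow_npos by lra. apply sqrt_0.
  rewrite !rpow_pos by lra. replace s with (s/2 + s/2) at 1 by field.
  rewrite Rpower_plus. apply sqrt_square. left; apply exp_pos.
Qed.

Definition rho d L (y : pt) := Rmin (enorm d (padd y (xw L))) (enorm d (psub y (xw L))).

Lemma rho_ge0 d L y : 0 <= rho d L y.
Proof. unfold rho. apply Rmin_glb; apply sqrt_pos. Qed.

Lemma sqrtV d s L y : 0 <= s -> sqrt (VDW d s L y) = rpow (rho d L y) (s/2).
Proof.
  intros Hs. unfold VDW, rho.
  pose proof (sqrt_pos (sumsq d (padd y (xw L)))). pose proof (sqrt_pos (sumsq d (psub y (xw L)))).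
  unfold enorm in *.
  set (a := sqrt (sumsq d (padd y (xw L)))) in *. set (b := sqrt (sumsq d (psub y (xw L)))) in *.
  unfold Rmin at 2. destruct (Rle_dec a b).
  - rewrite Rmin_left. apply sqrt_rpow; auto. apply rpow_mono; lra.
  - rewrite Rmin_right. apply sqrt_rpow; auto. apply rpow_mono; lra.
Qed.

Lemma Afun_0 s : Afun s 0 = 0.
Proof. unfold Afun. rewrite rpow_npos by lra. unfold Rdiv; ring. Qed.

Lemma Afun_mono s a b : 0 <= s -> 0 <= a <= b -> Afun s a <= Afun s b.
Proof.
  intros. unfold Afun. apply Rmult_le_compat_r. left; apply Rinv_0_lt_compat; lra.
  apply rpow_mono; lra.
Qed.

Lemma Afun_deriv s a : 2 <= s -> derivable_pt_lim (Afun s) a (rpow a (s/2)).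
Proof.
  intros Hs. apply is_derive_Reals.
  destruct (Rlt_dec 0 a) as [Ha|Ha].
  - apply (is_derive_ext_loc (fun x => / (1 + s/2) * Rpower x (1 + s/2))).
    + exists (mkposreal a Ha). intros y Hy. assert (Hy' : Rabs (y - a) < a) by (apply ball_R; exact Hy).
      apply Rabs_lt_between in Hy'.
      unfold Afun. rewrite (rpow_pos y) by lra. unfold Rdiv; apply Rmult_comm.
    + rewrite rpow_pos by auto.
      replace (Rpower a (s/2)) with (/ (1 + s/2) * ((1 + s/2) * Rpower a (1 + s/2 - 1))).
      apply is_derive_scal. apply is_derive_Reals. apply derivable_pt_lim_power; auto.
      replace (1 + s/2 - 1) with (s/2) by ring. field. lra.
  - destruct (Req_dec a 0) as [Ha0|Ha0].
    + subst a. rewrite rpow_npos by lra. apply is_derive_Reals.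
      intros eps Heps. exists (mkposreal (Rmin 1 eps) ltac:(apply Rmin_pos; lra)).
      intros h Hh Hhd. simpl in Hhd. rewrite Rplus_0_l, Afun_0.
      unfold Afun. destruct (Rlt_dec 0 h).
      * rewrite Rabs_pos_eq in Hhd by lra.
        assert (Rmin 1 eps <= 1) by apply Rmin_l. assert (Rmin 1 eps <= eps) by apply Rmin_r.
        replace ((rpow h (1 + s/2) / (1 + s/2) - 0) / h - 0) with (rpow h (s/2) / (1 + s/2)).
        2:{ rewrite !rpow_pos by lra.
            assert (E: Rpower h (s/2 + 1) = Rpower h (s/2) * h) by (rewrite Rpower_plus, Rpower_1 by lra; auto).
            rewrite (Rplus_comm 1 (s/2)). rewrite E. field. split; lra. }
        pose proof (rpow_le_id h (s/2) ltac:(lra) ltac:(lra)). pose proof (rpow_ge0 h (s/2)).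
        rewrite Rabs_pos_eq. apply Rle_lt_trans with (rpow h (s/2)).
        unfold Rdiv. rewrite <- (Rmult_1_r (rpow h (s/2))) at 2. apply Rmult_le_compat_l; auto.
        rewrite <- Rinv_1. apply Rinv_le_contravar; lra. lra.
        unfold Rdiv. apply Rmult_le_pos; auto. left; apply Rinv_0_lt_compat; lra.
      * rewrite rpow_npos by lra. replace ((0 / (1 + s / 2) - 0) / h - 0) with 0 by (field; split; lra).
        rewrite Rabs_R0. lra.
    + rewrite rpow_npos by lra.
      apply (is_derive_ext_loc (fun _ => 0)).
      * exists (mkposreal (-a) ltac:(lra)). intros y Hy. assert (Hy' : Rabs (y - a) < -a) by (apply ball_R; exact Hy).
        apply Rabs_lt_between in Hy'. unfold Afun. rewrite rpow_npos by lra. unfold Rdiv. symmetry; apply Rmult_0_l.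
      * apply (is_derive_const (V := R_NormedModule) 0 a).
Qed.

Lemma rpow_cont a p : 1 <= p -> forall e, 0 < e -> exists del, 0 < del /\
  forall x, Rabs (x - a) < del -> Rabs (rpow x p - rpow a p) < e.
Proof.
  intros Hp e He.
  destruct (Rlt_dec 0 a) as [Ha|Ha].
  - assert (C : continuity_pt (fun x => Rpower x p) a).
    { apply derivable_continuous_pt. exists (p * Rpower a (p-1)). apply derivable_pt_lim_power; auto. }
    destruct (C e He) as [alp [Halp Hc]].
    exists (Rmin alp a). split. apply Rmin_pos; lra.
    intros x Hx. assert (Rabs (x - a) < alp) by (eapply Rlt_le_trans; [exact Hx| apply Rmin_l]).
    assert (Rabs (x - a) < a) by (eapply Rlt_le_trans; [exact Hx| apply Rmin_r]).
    apply Rabs_lt_between in H0.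
    rewrite !rpow_pos by lra.
    destruct (Req_dec x a). subst. rewrite Rminus_diag, Rabs_R0. auto.
    apply (Hc x). split. split. constructor. auto. simpl. unfold R_dist. auto.
  - destruct (Req_dec a 0) as [Ha0|Ha0].
    + subst a. exists (Rmin 1 e). split. apply Rmin_pos; lra. intros x Hx.
      rewrite Rminus_0_r in Hx. rewrite (rpow_npos 0) by lra. rewrite Rminus_0_r.
      assert (Rmin 1 e <= 1) by apply Rmin_l. assert (Rmin 1 e <= e) by apply Rmin_r.
      destruct (Rlt_dec 0 x).
      * rewrite Rabs_pos_eq in Hx by lra. rewrite Rabs_pos_eq by apply rpow_ge0.
        pose proof (rpow_le_id x p ltac:(lra) Hp). lra.
      * rewrite rpow_npos by lra. rewrite Rabs_R0. lra.
    + exists (-a). split. lra. intros x Hx. apply Rabs_lt_between in Hx.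
      rewrite !rpow_npos by lra. rewrite Rminus_diag, Rabs_R0. lra.
Qed.

Definition ALat d s L (Phi : pt -> R) (y : pt) :=
  forall eps, 0 < eps -> exists del, 0 < del /\ forall z, enorm d (psub z y) < del ->
    Rabs (Phi z - Phi y) <= (sqrt (VDW d s L y) + eps) * enorm d (psub z y).

Definition AL d s L (Phi : pt -> R) := forall y, ALat d s L Phi y.

Lemma deriv_bound f a l : derivable_pt_lim f a l -> forall eps, 0 < eps -> exists del, 0 < del /\
  forall b, Rabs (b - a) < del -> Rabs (f b - f a) <= (Rabs l + eps) * Rabs (b - a).
Proof.
  intros H eps He. destruct (H eps He) as [del Hd]. exists del. split. apply cond_pos.
  intros b Hb. destruct (Req_dec b a). subst. rewrite !Rminus_diag, Rabs_R0. lra.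
  specialize (Hd (b - a) ltac:(lra) Hb). replace (a + (b - a)) with b in Hd by ring.
  assert (Hba : 0 < Rabs (b - a)) by (apply Rabs_pos_lt; lra).
  replace (f b - f a) with (((f b - f a) / (b - a) - l) * (b - a) + l * (b - a)) by (field; lra).
  eapply Rle_trans. apply Rabs_triang. rewrite !Rabs_mult. nra.
Qed.

Lemma GL d s (ell : pt -> R) : 2 <= s ->
  (forall y z, Rabs (ell z - ell y) <= enorm d (psub z y)) ->
  forall y eps, 0 < eps -> exists del, 0 < del /\ forall z, enorm d (psub z y) < del ->
    Rabs (Afun s (ell z) - Afun s (ell y)) <= (rpow (ell y) (s/2) + eps) * enorm d (psub z y).
Proof.
  intros Hs Hl y eps He.
  destruct (deriv_bound _ _ _ (Afun_deriv s (ell y) Hs) eps He) as [del [Hd Hb]].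
  exists del. split; auto. intros z Hz.
  specialize (Hl y z). assert (Rabs (ell z - ell y) < del) by lra.
  specialize (Hb _ H). rewrite (Rabs_pos_eq (rpow _ _)) in Hb by apply rpow_ge0.
  eapply Rle_trans. exact Hb. apply Rmult_le_compat_l; auto.
  pose proof (rpow_ge0 (ell y) (s/2)). lra.
Qed.

Lemma Rmin_lip a b a' b' e : Rabs (a - a') <= e -> Rabs (b - b') <= e -> Rabs (Rmin a b - Rmin a' b') <= e.
Proof.
  intros H1 H2. apply Rabs_le_between in H1. apply Rabs_le_between in H2. apply Rabs_le_between.
  unfold Rmin. destruct (Rle_dec a b); destruct (Rle_dec a' b'); lra.
Qed.

Lemma Rmax_lip C u v : Rabs (Rmax 0 (C - u) - Rmax 0 (C - v)) <= Rabs (u - v).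
Proof.
  unfold Rmax. destruct (Rle_dec 0 (C - u)); destruct (Rle_dec 0 (C - v));
  apply Rabs_le_between; pose proof (Rabs_le_between (u - v) (Rabs (u-v))) as [HH _];
  specialize (HH (Rle_refl _)); lra.
Qed.

Lemma enorm_shift_lip d w y z : Rabs (enorm d (padd z w) - enorm d (padd y w)) <= enorm d (psub z y).
Proof.
  eapply Rle_trans. apply enorm_lip. right. apply enorm_ext. intros. unfold psub, padd. ring.
Qed.

Lemma enorm_shift_lip' d w y z : Rabs (enorm d (psub z w) - enorm d (psub y w)) <= enorm d (psub z y).
Proof.
  eapply Rle_trans. apply enorm_lip. right. apply enorm_ext. intros. unfold psub. ring.
Qed.

Lemma rho_lip d L y z : Rabs (rho d L z - rho d L y) <= enorm d (psub z y).
Proof. unfold rho. apply Rmin_lip. apply enorm_shift_lip. apply enorm_shift_lip'. Qed.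

Lemma coord_lip d y z : (1 <= d)%nat -> Rabs (z 0%nat - y 0%nat) <= enorm d (psub z y).
Proof. intros. apply (enorm_ge_0 d (psub z y)); auto. Qed.

Lemma AL_psi d s L : 2 <= s -> AL d s L (fun y => Afun s (rho d L y)).
Proof.
  intros Hs y eps He. destruct (GL d s (rho d L) Hs (rho_lip d L) y eps He) as [del [Hd H]].
  exists del; split; auto. intros z Hz. rewrite sqrtV by lra. auto.
Qed.

Lemma AL_opp d s L Phi : AL d s L Phi -> AL d s L (fun y => - Phi y).
Proof.
  intros H y eps He. destruct (H y eps He) as [del [Hd H1]]. exists del; split; auto.
  intros z Hz. replace (- Phi z - - Phi y) with (- (Phi z - Phi y)) by ring. rewrite Rabs_Ropp. auto.
Qed.

Lemma sumsq_padd_xw d L y : (1 <= d)%nat ->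
  sumsq d (padd y (xw L)) = sumsq d y + L * y 0%nat + L^2/4.
Proof.
  induction d; intros H; [lia|]. destruct d.
  - simpl. unfold padd, xw. simpl. field.
  - change (sumsq (S (S d)) (padd y (xw L))) with (sumsq (S d) (padd y (xw L)) + (padd y (xw L) (S d))^2).
    change (sumsq (S (S d)) y) with (sumsq (S d) y + (y (S d))^2).
    rewrite IHd by lia. unfold padd, xw. simpl. ring.
Qed.

Lemma sumsq_psub_xw d L y : (1 <= d)%nat ->
  sumsq d (psub y (xw L)) = sumsq d y - L * y 0%nat + L^2/4.
Proof.
  induction d; intros H; [lia|]. destruct d.
  - simpl. unfold psub, xw. simpl. field.
  - change (sumsq (S (S d)) (psub y (xw L))) with (sumsq (S d) (psub y (xw L)) + (psub y (xw L) (S d))^2).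
    change (sumsq (S (S d)) y) with (sumsq (S d) y + (y (S d))^2).
    rewrite IHd by lia. unfold psub, xw. simpl. ring.
Qed.

Lemma rho_right d L y : (1 <= d)%nat -> 0 < L -> 0 <= y 0%nat -> rho d L y = enorm d (psub y (xw L)).
Proof.
  intros Hd HL Hy. unfold rho. rewrite Rmin_right; auto.
  unfold enorm. apply sqrt_le_1_alt. rewrite sumsq_padd_xw, sumsq_psub_xw by auto. nra.
Qed.

Lemma rho_left d L y : (1 <= d)%nat -> 0 < L -> y 0%nat <= 0 -> rho d L y = enorm d (padd y (xw L)).
Proof.
  intros Hd HL Hy. unfold rho. rewrite Rmin_left; auto.
  unfold enorm. apply sqrt_le_1_alt. rewrite sumsq_padd_xw, sumsq_psub_xw by auto. nra.
Qed.

Lemma comb d s L Phi1 Phi2 : (1 <= d)%nat ->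
  (forall y, y 0%nat <= 0 -> ALat d s L Phi1 y) ->
  (forall y, 0 <= y 0%nat -> ALat d s L Phi2 y) ->
  (forall y z, 0 <= y 0%nat -> 0 <= z 0%nat -> Phi1 y = Phi1 z) ->
  (forall y z, y 0%nat <= 0 -> z 0%nat <= 0 -> Phi2 y = Phi2 z) ->
  AL d s L (fun y => Phi1 y + Phi2 y).
Proof.
  intros Hd H1 H2 C1 C2 y eps He.
  destruct (Rtotal_order (y 0%nat) 0) as [Hy|[Hy|Hy]].
  - destruct (H1 y ltac:(lra) eps He) as [del [Hdel Hb]].
    exists (Rmin del (- y 0%nat)). split. apply Rmin_pos; lra.
    intros z Hz. assert (enorm d (psub z y) < del) by (eapply Rlt_le_trans; [exact Hz|apply Rmin_l]).
    assert (enorm d (psub z y) < - y 0%nat) by (eapply Rlt_le_trans; [exact Hz|apply Rmin_r]).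
    pose proof (coord_lip d y z Hd). apply Rabs_le_between in H3.
    rewrite (C2 z y) by lra. replace (Phi1 z + Phi2 y - (Phi1 y + Phi2 y)) with (Phi1 z - Phi1 y) by ring. auto.
  - destruct (H1 y ltac:(lra) eps He) as [del1 [Hdel1 Hb1]].
    destruct (H2 y ltac:(lra) eps He) as [del2 [Hdel2 Hb2]].
    exists (Rmin del1 del2). split. apply Rmin_pos; lra.
    intros z Hz. assert (enorm d (psub z y) < del1) by (eapply Rlt_le_trans; [exact Hz|apply Rmin_l]).
    assert (enorm d (psub z y) < del2) by (eapply Rlt_le_trans; [exact Hz|apply Rmin_r]).
    destruct (Rle_dec (z 0%nat) 0).
    + rewrite (C2 z y) by lra. replace (Phi1 z + Phi2 y - (Phi1 y + Phi2 y)) with (Phi1 z - Phi1 y) by ring. auto.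
    + rewrite (C1 z y) by lra. replace (Phi1 y + Phi2 z - (Phi1 y + Phi2 y)) with (Phi2 z - Phi2 y) by ring. auto.
  - destruct (H2 y ltac:(lra) eps He) as [del [Hdel Hb]].
    exists (Rmin del (y 0%nat)). split. apply Rmin_pos; lra.
    intros z Hz. assert (enorm d (psub z y) < del) by (eapply Rlt_le_trans; [exact Hz|apply Rmin_l]).
    assert (enorm d (psub z y) < y 0%nat) by (eapply Rlt_le_trans; [exact Hz|apply Rmin_r]).
    pose proof (coord_lip d y z Hd). apply Rabs_le_between in H3.
    rewrite (C1 z y) by lra. replace (Phi1 y + Phi2 z - (Phi1 y + Phi2 y)) with (Phi2 z - Phi2 y) by ring. auto.
Qed.

Definition T1 s L (y : pt) := Afun s (Rmin (Rabs (y 0%nat + L/2)) (L/2)).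
Definition T2 d s L (y : pt) := Rmax 0 (Afun s (L/2) - Afun s (enorm d (psub y (xw L)))).
Definition T1' s L (y : pt) := Afun s (Rmin (Rabs (y 0%nat - L/2)) (L/2)).
Definition T2' d s L (y : pt) := Rmax 0 (Afun s (L/2) - Afun s (enorm d (padd y (xw L)))).

Lemma padd_xw0 y L : padd y (xw L) 0%nat = y 0%nat + L/2.
Proof. unfold padd, xw. simpl. auto. Qed.
Lemma psub_xw0 y L : psub y (xw L) 0%nat = y 0%nat - L/2.
Proof. unfold psub, xw. simpl. auto. Qed.

Lemma AL_Theta d s L : (1 <= d)%nat -> 2 <= s -> 0 < L -> AL d s L (fun y => T1 s L y + T2 d s L y).
Proof.
  intros Hd Hs HL. apply comb; auto.
  - intros y Hy eps He.
    set (ell := fun y : pt => Rmin (Rabs (y 0%nat + L/2)) (L/2)).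
    assert (Hl : forall y z, Rabs (ell z - ell y) <= enorm d (psub z y)).
    { intros y1 z1. unfold ell. eapply Rle_trans; [|apply (coord_lip d y1 z1 Hd)].
      apply Rmin_lip. eapply Rle_trans. apply Rabs_triang_inv2. right. f_equal. ring.
      rewrite Rminus_diag, Rabs_R0. apply Rabs_pos. }
    destruct (GL d s ell Hs Hl y eps He) as [del [Hdel Hb]].
    exists del; split; auto. intros z Hz. specialize (Hb z Hz). unfold T1. fold (ell z). fold (ell y).
    eapply Rle_trans. exact Hb. apply Rmult_le_compat_r. apply enorm_ge0.
    apply Rplus_le_compat_r. rewrite sqrtV by lra. apply rpow_mono; [|lra]. split.
    unfold ell. apply Rmin_glb. apply Rabs_pos. lra.
    unfold rho. apply Rmin_glb.
    + unfold ell. eapply Rle_trans. apply Rmin_l. rewrite <- padd_xw0. apply enorm_ge_0; auto.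
    + unfold ell. eapply Rle_trans. apply Rmin_r. eapply Rle_trans; [|apply (enorm_ge_0 d _ Hd)].
      rewrite psub_xw0. rewrite Rabs_left1; lra.
  - intros y Hy eps He.
    destruct (GL d s (fun y => enorm d (psub y (xw L))) Hs (enorm_shift_lip' d (xw L)) y eps He) as [del [Hdel Hb]].
    exists del; split; auto. intros z Hz. specialize (Hb z Hz). unfold T2.
    rewrite sqrtV, rho_right by (auto || lra).
    eapply Rle_trans. apply Rmax_lip. exact Hb.
  - intros y z Hy Hz. unfold T1. rewrite !Rmin_right; auto.
    rewrite Rabs_pos_eq; lra. rewrite Rabs_pos_eq; lra.
  - intros y z Hy Hz. unfold T2.
    assert (forall w : pt, w 0%nat <= 0 -> Afun s (L/2) <= Afun s (enorm d (psub w (xw L)))).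
    { intros w Hw. apply Afun_mono. lra. split. lra.
      eapply Rle_trans; [|apply (enorm_ge_0 d _ Hd)]. rewrite psub_xw0. rewrite Rabs_left1; lra. }
    pose proof (H y Hy). pose proof (H z Hz).
    rewrite !Rmax_left; lra.
Qed.

Lemma AL_Theta' d s L : (1 <= d)%nat -> 2 <= s -> 0 < L -> AL d s L (fun y => T2' d s L y + T1' s L y).
Proof.
  intros Hd Hs HL. apply comb; auto.
  - intros y Hy eps He.
    destruct (GL d s (fun y => enorm d (padd y (xw L))) Hs (enorm_shift_lip d (xw L)) y eps He) as [del [Hdel Hb]].
    exists del; split; auto. intros z Hz. specialize (Hb z Hz). unfold T2'.
    rewrite sqrtV, rho_left by (auto || lra).
    eapply Rle_trans. apply Rmax_lip. exact Hb.
  - intros y Hy eps He.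
    set (ell := fun y : pt => Rmin (Rabs (y 0%nat - L/2)) (L/2)).
    assert (Hl : forall y z, Rabs (ell z - ell y) <= enorm d (psub z y)).
    { intros y1 z1. unfold ell. eapply Rle_trans; [|apply (coord_lip d y1 z1 Hd)].
      apply Rmin_lip. eapply Rle_trans. apply Rabs_triang_inv2. right. f_equal. ring.
      rewrite Rminus_diag, Rabs_R0. apply Rabs_pos. }
    destruct (GL d s ell Hs Hl y eps He) as [del [Hdel Hb]].
    exists del; split; auto. intros z Hz. specialize (Hb z Hz). unfold T1'. fold (ell z). fold (ell y).
    eapply Rle_trans. exact Hb. apply Rmult_le_compat_r. apply enorm_ge0.
    apply Rplus_le_compat_r. rewrite sqrtV by lra. apply rpow_mono; [|lra]. split.
    unfold ell. apply Rmin_glb. apply Rabs_pos. lra.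
    unfold rho. apply Rmin_glb.
    + unfold ell. eapply Rle_trans. apply Rmin_r. eapply Rle_trans; [|apply (enorm_ge_0 d _ Hd)].
      rewrite padd_xw0. rewrite Rabs_pos_eq; lra.
    + unfold ell. eapply Rle_trans. apply Rmin_l. rewrite <- psub_xw0. apply enorm_ge_0; auto.
  - intros y z Hy Hz. unfold T2'.
    assert (forall w : pt, 0 <= w 0%nat -> Afun s (L/2) <= Afun s (enorm d (padd w (xw L)))).
    { intros w Hw. apply Afun_mono. lra. split. lra.
      eapply Rle_trans; [|apply (enorm_ge_0 d _ Hd)]. rewrite padd_xw0. rewrite Rabs_pos_eq; lra. }
    pose proof (H y Hy). pose proof (H z Hz).
    rewrite !Rmax_left; lra.
  - intros y z Hy Hz. unfold T1'. rewrite !Rmin_right; auto.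
    rewrite Rabs_left1; lra. rewrite Rabs_left1; lra.
Qed.

Definition ccont a b (f : R -> R) := forall u, a <= u <= b -> forall e, 0 < e ->
  exists del, 0 < del /\ forall v, a <= v <= b -> Rabs (v - u) < del -> Rabs (f v - f u) < e.

Lemma ccont_of_cont_on a b f : cont_on a b f -> ccont a b f.
Proof. intros H u Hu e He. apply (ed_of_within (fun v => a <= v <= b) f u (H u Hu) e He). Qed.

Lemma ccont_sub a b a' b' f : a <= a' -> b' <= b -> ccont a b f -> ccont a' b' f.
Proof.
  intros H1 H2 H u Hu e He. destruct (H u ltac:(lra) e He) as [del [Hd Hv]].
  exists del; split; auto. intros v Hv' Hvu. apply Hv; auto; lra.
Qed.

Lemma fin_delta (P : nat -> R -> Prop) d :
  (forall i del del', 0 < del' <= del -> P i del -> P i del') ->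
  (forall i, (i < d)%nat -> exists del, 0 < del /\ P i del) ->
  exists del, 0 < del /\ forall i, (i < d)%nat -> P i del.
Proof.
  intros Hm. induction d; intros H.
  - exists 1. split. lra. intros; lia.
  - destruct IHd as [del1 [H1 H1']]. intros; apply H; lia.
    destruct (H d ltac:(lia)) as [del2 [H2 H2']].
    exists (Rmin del1 del2). split. apply Rmin_pos; auto.
    intros i Hi. destruct (Nat.eq_dec i d).
    + subst. apply (Hm d del2). split. apply Rmin_pos; auto. apply Rmin_r. auto.
    + apply (Hm i del1). split. apply Rmin_pos; auto. apply Rmin_l. apply H1'. lia.
Qed.

Lemma INR_pos_bound d e : 0 < e -> INR d * (e / (INR d + 1)) < e.
Proof.
  intros He. pose proof (pos_INR d).
  assert (0 < e / (INR d + 1)) by (apply Rdiv_lt_0_compat; lra).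
  apply Rlt_le_trans with ((INR d + 1) * (e / (INR d + 1))). lra.
  right. field. lra.
Qed.

Lemma vcont d a b (g : R -> pt) : (forall i, (i < d)%nat -> ccont a b (fun u => g u i)) ->
  forall u, a <= u <= b -> forall e, 0 < e -> exists del, 0 < del /\
  forall v, a <= v <= b -> Rabs (v - u) < del -> enorm d (psub (g v) (g u)) < e.
Proof.
  intros Hg u Hu e He.
  set (e' := e / (INR d + 1)).
  assert (He' : 0 < e') by (unfold e'; pose proof (pos_INR d); apply Rdiv_lt_0_compat; lra).
  destruct (fin_delta (fun i del => forall v, a <= v <= b -> Rabs (v - u) < del -> Rabs (g v i - g u i) < e') d)
    as [del [Hd Hdel]].
  - intros i del del' Hdd P v Hv Hvu. apply P; auto. lra.
  - intros i Hi. apply (Hg i Hi u Hu e' He').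
  - exists del; split; auto. intros v Hv Hvu.
    eapply Rle_lt_trans. apply enorm_le_sabs.
    eapply Rle_lt_trans. apply (sabs_le d _ e'). intros i Hi. left. apply Hdel; auto.
    apply INR_pos_bound; auto.
Qed.

Lemma ccont_mult a b f g : ccont a b f -> ccont a b g -> ccont a b (fun u => f u * g u).
Proof.
  intros Hf Hg u Hu e He.
  set (M := Rabs (f u) + Rabs (g u) + 1).
  assert (HM : 1 <= M) by (unfold M; pose proof (Rabs_pos (f u)); pose proof (Rabs_pos (g u)); lra).
  set (e1 := Rmin 1 (e / (3 * M))).
  assert (He1 : 0 < e1) by (apply Rmin_pos; [lra| apply Rdiv_lt_0_compat; lra]).
  destruct (Hf u Hu e1 He1) as [d1 [Hd1 H1]]. destruct (Hg u Hu e1 He1) as [d2 [Hd2 H2]].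
  exists (Rmin d1 d2). split. apply Rmin_pos; auto. intros v Hv Hvu.
  assert (A1 : Rabs (f v - f u) < e1) by (apply H1; auto; eapply Rlt_le_trans; [exact Hvu|apply Rmin_l]).
  assert (A2 : Rabs (g v - g u) < e1) by (apply H2; auto; eapply Rlt_le_trans; [exact Hvu|apply Rmin_r]).
  replace (f v * g v - f u * g u) with ((f v - f u) * (g v - g u) + (f v - f u) * g u + f u * (g v - g u)) by ring.
  assert (e1 <= 1) by apply Rmin_l. assert (e1 <= e / (3 * M)) by apply Rmin_r.
  assert (E3 : e / (3 * M) * (3 * M) = e) by (field; lra).
  pose proof (Rabs_pos (f v - f u)). pose proof (Rabs_pos (g v - g u)).
  pose proof (Rabs_pos (f u)). pose proof (Rabs_pos (g u)).
  eapply Rle_lt_trans. eapply Rle_trans. apply Rabs_triang. apply Rplus_le_compat_r. apply Rabs_triang.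
  rewrite !Rabs_mult.
  assert (Rabs (f v - f u) * Rabs (g v - g u) <= e1 * 1) by (apply Rmult_le_compat; lra).
  assert (Rabs (f v - f u) * Rabs (g u) <= e1 * Rabs (g u)) by (apply Rmult_le_compat_r; lra).
  assert (Rabs (f u) * Rabs (g v - g u) <= Rabs (f u) * e1) by (apply Rmult_le_compat_l; lra).
  assert (e1 * M <= e / (3 * M) * M) by (apply Rmult_le_compat_r; lra).
  assert (e / (3 * M) * M = e / 3) by (field; lra).
  unfold M in *. 
  assert (e1 * 1 + e1 * Rabs (g u) + Rabs (f u) * e1 <= e1 * M) by (unfold M; nra).
  assert (Rabs (f v - f u) * Rabs (g v - g u) < e1 * 1 \/ Rabs (f v - f u) * Rabs (g u) < e1 * Rabs (g u) \/ True) by auto.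
  assert (Rabs (f v - f u) * Rabs (g v - g u) < e1 * 1).
  { apply Rle_lt_trans with (Rabs (f v - f u) * 1). apply Rmult_le_compat_l; lra. lra. }
  unfold M in *. lra.
Qed.

Lemma CI a b H : a < b -> ccont a b H ->
  (forall u, a < u < b -> exists del, 0 < del /\ forall v, u < v < u + del -> v <= b -> H v <= H u) ->
  H b <= H a.
Proof.
  intros Hab Hc Hs.
  assert (Heta : forall eta, 0 < eta -> H b <= H a + eta).
  2:{ destruct (Rle_dec (H b) (H a)); auto. specialize (Heta ((H b - H a)/2) ltac:(lra)). lra. }
  intros eta Heta.
  set (E := fun w => a <= w <= b /\ forall w', a < w' <= w -> H w' <= H a + eta).
  assert (Ea : E a) by (split; [lra| intros; lra]).
  destruct (completeness E) as [m [Hub Hlub]].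
  { exists b. intros w [Hw _]. lra. }
  { exists a; auto. }
  assert (Ham : a <= m) by (apply Hub; auto).
  assert (Hmb : m <= b) by (apply Hlub; intros w [Hw _]; lra).
  assert (Below : forall w', a < w' < m -> H w' <= H a + eta).
  { intros w' Hw'. destruct (classic (exists w, E w /\ w' < w)) as [[w [[_ Ew] Hw]]|Hn].
    - apply Ew. lra.
    - exfalso. assert (m <= w'). apply Hlub. intros w Ew. apply Rnot_lt_le. intros Hlt. apply Hn. exists w; auto.
      lra. }
  assert (Hma : a < m).
  { destruct (Hc a ltac:(lra) eta Heta) as [da [Hda Ha']].
    set (w0 := Rmin (a + da/2) b).
    assert (w0 <= a + da/2) by apply Rmin_l. assert (w0 <= b) by apply Rmin_r.
    assert (a < w0) by (apply Rmin_glb_lt; lra).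
    assert (E w0). { split. lra. intros w' Hw'. specialize (Ha' w' ltac:(lra)).
      assert (Rabs (w' - a) < da) by (rewrite Rabs_pos_eq; lra). specialize (Ha' H3). apply Rabs_lt_between in Ha'. lra. }
    specialize (Hub w0 H3). lra. }
  assert (Hm : H m <= H a + eta).
  { apply Rnot_lt_le. intros Hlt. set (e := (H m - (H a + eta))/2).
    destruct (Hc m ltac:(lra) e ltac:(unfold e; lra)) as [dm [Hdm Hm']].
    set (v := m - Rmin dm (m - a) / 2).
    assert (Rmin dm (m - a) <= dm) by apply Rmin_l. assert (Rmin dm (m - a) <= m - a) by apply Rmin_r.
    assert (0 < Rmin dm (m - a)) by (apply Rmin_pos; lra).
    specialize (Hm' v ltac:(unfold v; lra)). assert (Rabs (v - m) < dm) by (unfold v; rewrite Rabs_left; lra).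
    specialize (Hm' H3). apply Rabs_lt_between in Hm'. specialize (Below v ltac:(unfold v; lra)).
    unfold e in *. lra. }
  assert (Em : E m).
  { split. lra. intros w' Hw'. destruct (Req_dec w' m). subst; auto. apply Below; lra. }
  destruct (Req_dec m b). subst; auto.
  exfalso. destruct (Hs m ltac:(lra)) as [dl [Hdl Hstep]].
  set (w1 := Rmin (m + dl/2) b).
  assert (w1 <= m + dl/2) by apply Rmin_l. assert (w1 <= b) by apply Rmin_r.
  assert (m < w1) by (apply Rmin_glb_lt; lra).
  assert (E w1).
  { split. lra. intros w' Hw'. destruct (Rle_dec w' m). apply Em; lra.
    specialize (Hstep w' ltac:(lra) ltac:(lra)). lra. }
  specialize (Hub w1 H4). lra.
Qed.

Lemma deriv_lin f x l : derivable_pt_lim f x l -> forall eps, 0 < eps -> exists del, 0 < del /\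
  forall y, Rabs (y - x) < del -> Rabs (f y - f x - (y - x) * l) <= eps * Rabs (y - x).
Proof.
  intros H eps He. destruct (H eps He) as [del Hd]. exists del. split. apply cond_pos.
  intros y Hy. destruct (Req_dec y x). subst. rewrite !Rminus_diag. rewrite Rmult_0_l, Rminus_0_r, Rabs_R0. lra.
  specialize (Hd (y - x) ltac:(lra) Hy). replace (x + (y - x)) with y in Hd by ring.
  replace (f y - f x - (y - x) * l) with (((f y - f x) / (y - x) - l) * (y - x)) by (field; lra).
  rewrite Rabs_mult. apply Rmult_le_compat_r. apply Rabs_pos. lra.
Qed.

Lemma cont_ed f x : continuous f x -> forall e, 0 < e -> exists del, 0 < del /\
  forall y, Rabs (y - x) < del -> Rabs (f y - f x) < e.
Proof.
  intros H e He. apply continuity_pt_filterlim in H.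
  destruct (H e He) as [alp [Ha Hc]]. exists alp. split; auto.
  intros y Hy. destruct (Req_dec y x). subst. rewrite Rminus_diag, Rabs_R0. auto.
  apply (Hc y). split. split. constructor. auto. simpl. unfold R_dist. auto.
Qed.

Definition clamp a b u := Rmax a (Rmin b u).

Lemma clamp_in a b u : a <= b -> a <= clamp a b u <= b.
Proof. intros. unfold clamp, Rmax, Rmin. destruct (Rle_dec b u); destruct (Rle_dec a _); lra. Qed.

Lemma clamp_id a b u : a <= u <= b -> clamp a b u = u.
Proof. intros. unfold clamp, Rmax, Rmin. destruct (Rle_dec b u); destruct (Rle_dec a _); lra. Qed.

Lemma clamp_lip a b u v : a <= b -> Rabs (clamp a b v - clamp a b u) <= Rabs (v - u).
Proof.
  intros. unfold clamp, Rmax, Rmin.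
  destruct (Rle_dec b u); destruct (Rle_dec b v); cbv iota;
  repeat match goal with |- context[Rle_dec ?x ?y] => destruct (Rle_dec x y) end;
  apply Rabs_le_between; pose proof (Rabs_le_between (v - u) (Rabs (v-u))) as [HH _];
  specialize (HH (Rle_refl _)); lra.
Qed.

Lemma arith S N Dn eps : 0 <= S -> 0 <= N -> 0 <= Dn -> 0 < eps ->
  (S + Rmin 1 (eps / (6 * (N + 1)))) * (N + Dn * (eps / (6 * (S + 1) * (Dn + 1)))) <= S * N + eps / 2.
Proof.
  intros HS HN HD He.
  set (q1 := eps / (6 * (N + 1))). set (e1 := Rmin 1 q1). set (e2 := eps / (6 * (S + 1) * (Dn + 1))).
  assert (Q1 : q1 * (N + 1) = eps / 6) by (unfold q1; field; lra).
  assert (Q2 : e2 * ((S + 1) * (Dn + 1)) = eps / 6) by (unfold e2; field; lra).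
  assert (Hq1 : 0 < q1) by (unfold q1; apply Rdiv_lt_0_compat; lra).
  assert (He2 : 0 < e2) by (unfold e2; apply Rdiv_lt_0_compat; nra).
  assert (E1 : e1 <= 1) by apply Rmin_l. assert (E1' : e1 <= q1) by apply Rmin_r.
  assert (E1p : 0 < e1) by (apply Rmin_pos; lra).
  assert (A1 : e1 * N <= eps / 6).
  { assert (e1 * N <= q1 * N) by (apply Rmult_le_compat_r; lra). rewrite <- Q1. nra. }
  assert (A2 : S * (Dn * e2) <= eps / 6).
  { rewrite <- Q2. assert (0 <= S * Dn) by nra. assert (0 <= S * e2) by nra. assert (0 <= Dn * e2) by nra. nra. }
  assert (A3 : e1 * (Dn * e2) <= eps / 6).
  { assert (0 <= Dn * e2) by nra. assert (e1 * (Dn * e2) <= 1 * (Dn * e2)) by (apply Rmult_le_compat_r; lra).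
    rewrite <- Q2. assert (0 <= S * Dn * e2) by (apply Rmult_le_pos; nra). nra. }
  assert (E : (S + e1) * (N + Dn * e2) = S * N + e1 * N + S * (Dn * e2) + e1 * (Dn * e2)) by ring.
  rewrite E. lra.
Qed.

Lemma ccont_K a b P F eps : ccont a b P -> ccont a b F -> ccont a b (fun w => P w - F w - eps * w).
Proof.
  intros HP HF u Hu e He.
  set (e3 := e / 3).
  destruct (HP u Hu e3 ltac:(unfold e3; lra)) as [d1 [Hd1 H1]].
  destruct (HF u Hu e3 ltac:(unfold e3; lra)) as [d2 [Hd2 H2]].
  exists (Rmin (Rmin d1 d2) (e3 / (Rabs eps + 1))). split.
  apply Rmin_pos. apply Rmin_pos; auto. apply Rdiv_lt_0_compat. unfold e3; lra. pose proof (Rabs_pos eps); lra.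
  intros v Hv Hvu.
  assert (Rmin (Rmin d1 d2) (e3 / (Rabs eps + 1)) <= Rmin d1 d2) by apply Rmin_l.
  assert (Rmin d1 d2 <= d1) by apply Rmin_l. assert (Rmin d1 d2 <= d2) by apply Rmin_r.
  assert (Rmin (Rmin d1 d2) (e3 / (Rabs eps + 1)) <= e3 / (Rabs eps + 1)) by apply Rmin_r.
  specialize (H1 v Hv ltac:(lra)). specialize (H2 v Hv ltac:(lra)).
  assert (Rabs (eps * (v - u)) < e3).
  { rewrite Rabs_mult. pose proof (Rabs_pos eps). pose proof (Rabs_pos (v - u)).
    assert (e3 / (Rabs eps + 1) * (Rabs eps + 1) = e3) by (field; lra).
    assert (Rabs (v - u) < e3 / (Rabs eps + 1)) by lra. nra. }
  replace (P v - F v - eps * v - (P u - F u - eps * u)) with ((P v - P u) - (F v - F u) - eps * (v - u)) by ring.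
  eapply Rle_lt_trans. eapply Rle_trans. apply Rabs_triang. apply Rplus_le_compat_r. apply Rabs_triang.
  rewrite Rabs_Ropp, Rabs_Ropp. unfold e3 in *. lra.
Qed.

Lemma piece d s L Phi a b (g D : R -> pt) :
  (1 <= d)%nat -> 2 <= s -> a < b -> AL d s L Phi ->
  (forall i, (i < d)%nat -> ccont a b (fun u => g u i)) ->
  (forall i, (i < d)%nat -> ccont a b (fun u => D u i)) ->
  (forall i u, (i < d)%nat -> a < u < b -> is_derive (fun v => g v i) u (D u i)) ->
  Phi (g b) - Phi (g a) <= RInt (fun u => sqrt (VDW d s L (g u)) * enorm d (D u)) a b.
Proof.
  intros Hd Hs Hab HAL Hg HD Hder.
  set (f := fun u => sqrt (VDW d s L (g u)) * enorm d (D u)).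
  assert (fcont : ccont a b f).
  { apply ccont_mult.
    - intros u Hu e He. rewrite (sqrtV d s L (g u)) by lra.
      destruct (rpow_cont (rho d L (g u)) (s/2) ltac:(lra) e He) as [d1 [Hd1 H1]].
      destruct (vcont d a b g Hg u Hu d1 Hd1) as [d2 [Hd2 H2]].
      exists d2; split; auto. intros v Hv Hvu. rewrite (sqrtV d s L (g v)) by lra.
      apply H1. eapply Rle_lt_trans. apply rho_lip. auto.
    - intros u Hu e He.
      destruct (vcont d a b D HD u Hu e He) as [d2 [Hd2 H2]].
      exists d2; split; auto. intros v Hv Hvu. eapply Rle_lt_trans. apply enorm_lip. auto. }
  set (ft := fun u => f (clamp a b u)).
  assert (ftc : forall x, continuous ft x).
  { intros x. apply continuity_pt_filterlim. intros eps Heps.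
    destruct (fcont (clamp a b x) (clamp_in a b x ltac:(lra)) eps Heps) as [del [Hdel Hc]].
    exists del. split; auto. intros y [_ Hy]. simpl in Hy. unfold R_dist in Hy. simpl. unfold R_dist.
    unfold ft. apply Hc. apply clamp_in; lra. eapply Rle_lt_trans. apply clamp_lip; lra. auto. }
  assert (exR : forall u v, ex_RInt ft u v).
  { intros u v. apply (ex_RInt_continuous (V := R_CompleteNormedModule)). intros; apply ftc. }
  set (F := fun w => RInt ft a w).
  assert (Fder : forall x, is_derive F x (ft x)).
  { intros x. apply (is_derive_RInt ft F a x). exists (mkposreal 1 ltac:(lra)). intros y _. unfold F. apply (RInt_correct (V := R_CompleteNormedModule)). apply exR.
    apply ftc. }
  assert (Fcont : ccont a b F).
  { intros u Hu e He. destruct (cont_ed F u (ex_derive_continuous F u (ex_intro _ _ (Fder u))) e He) as [del [Hdel H]].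
    exists del; split; auto. }
  assert (Pcont : ccont a b (fun u => Phi (g u))).
  { intros u Hu e He.
    destruct (HAL (g u) 1 ltac:(lra)) as [d1 [Hd1 H1]].
    set (S := sqrt (VDW d s L (g u))).
    assert (HS : 0 <= S) by apply sqrt_pos.
    set (e' := Rmin d1 (e / (S + 2))).
    assert (He' : 0 < e') by (apply Rmin_pos; auto; apply Rdiv_lt_0_compat; lra).
    destruct (vcont d a b g Hg u Hu e' He') as [d2 [Hd2 H2]].
    exists d2; split; auto. intros v Hv Hvu. specialize (H2 v Hv Hvu).
    assert (e' <= d1) by apply Rmin_l. assert (e' <= e / (S + 2)) by apply Rmin_r.
    specialize (H1 (g v) ltac:(lra)). fold S in H1.
    pose proof (enorm_ge0 d (psub (g v) (g u))).
    assert (e / (S + 2) * (S + 2) = e) by (field; lra).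
    assert ((S + 1) * enorm d (psub (g v) (g u)) <= (S + 1) * (e / (S + 2))).
    { apply Rmult_le_compat_l; lra. }
    assert (0 < e / (S + 2)) by (apply Rdiv_lt_0_compat; lra).
    nra. }
  assert (Main : forall eps, 0 < eps -> Phi (g b) - Phi (g a) <= F b + eps * (b - a)).
  { intros eps Heps.
    set (K := fun w => Phi (g w) - F w - eps * w).
    assert (HK : K b <= K a).
    { apply CI; auto. apply ccont_K; auto.
      intros u Hu.
      set (S := sqrt (VDW d s L (g u))). set (N := enorm d (D u)). set (Dn := INR d).
      assert (HS : 0 <= S) by apply sqrt_pos. assert (HN : 0 <= N) by apply enorm_ge0.
      assert (HDn : 0 <= Dn) by apply pos_INR.
      set (e1 := Rmin 1 (eps / (6 * (N + 1)))). set (e2 := eps / (6 * (S + 1) * (Dn + 1))).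
      assert (He1 : 0 < e1) by (apply Rmin_pos; [lra| apply Rdiv_lt_0_compat; lra]).
      assert (He2 : 0 < e2) by (apply Rdiv_lt_0_compat; nra).
      destruct (HAL (g u) e1 He1) as [d1 [Hd1 H1]]. fold S in H1.
      destruct (vcont d a b g Hg u ltac:(lra) d1 Hd1) as [d3 [Hd3 H3]].
      destruct (fin_delta (fun i del => forall v, Rabs (v - u) < del ->
                Rabs (g v i - g u i - (v - u) * D u i) <= e2 * Rabs (v - u)) d) as [d2 [Hd2 H2]].
      { intros i del del' Hdd P v Hv. apply P. lra. }
      { intros i Hi. apply deriv_lin; auto. apply is_derive_Reals. apply Hder; auto. }
      destruct (deriv_lin F u (ft u) (proj1 (is_derive_Reals _ _ _) (Fder u)) (eps/2) ltac:(lra)) as [d4 [Hd4 H4]].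
      exists (Rmin (Rmin d1 d2) (Rmin d3 d4)). split.
      { apply Rmin_pos; apply Rmin_pos; auto. }
      intros v Hv Hvb.
      assert (Rmin (Rmin d1 d2) (Rmin d3 d4) <= Rmin d1 d2) by apply Rmin_l.
      assert (Rmin (Rmin d1 d2) (Rmin d3 d4) <= Rmin d3 d4) by apply Rmin_r.
      assert (Rmin d1 d2 <= d2) by apply Rmin_r.
      assert (Rmin d3 d4 <= d3) by apply Rmin_l. assert (Rmin d3 d4 <= d4) by apply Rmin_r.
      set (h := v - u). assert (Hh : 0 < h) by (unfold h; lra).
      assert (Habs : Rabs (v - u) = h) by (unfold h; apply Rabs_pos_eq; lra).
      assert (Hvu : Rabs (v - u) < Rmin (Rmin d1 d2) (Rmin d3 d4)) by (rewrite Habs; unfold h; lra).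
      specialize (H3 v ltac:(lra) ltac:(lra)).
      specialize (H4 v ltac:(lra)).
      set (n := enorm d (psub (g v) (g u))).
      assert (Hn : n <= h * N + Dn * (e2 * h)).
      { unfold n. rewrite (enorm_ext d (psub (g v) (g u))
             (padd (fun i => h * D u i) (fun i => g v i - g u i - (v - u) * D u i))).
        2:{ intros; unfold padd, psub, h; ring. }
        eapply Rle_trans. apply enorm_triangle. rewrite enorm_scal. rewrite Rabs_pos_eq by lra.
        apply Rplus_le_compat_l. eapply Rle_trans. apply enorm_le_sabs. apply sabs_le.
        intros i Hi. rewrite <- Habs. apply H2; auto. lra. }
      specialize (H1 (g v) H3). fold n in H1. apply Rabs_le_between in H1.
      apply Rabs_le_between in H4. rewrite Habs in H4.
      assert (ftu : ft u = S * N) by (unfold ft, f; rewrite clamp_id by lra; auto).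
      rewrite ftu in H4.
      assert (Harith : (S + e1) * (N + Dn * e2) <= S * N + eps / 2) by (unfold e1, e2; apply arith; auto).
      assert (HH : (S + e1) * n <= (S + e1) * (h * N + Dn * (e2 * h))) by (apply Rmult_le_compat_l; lra).
      assert (HH2 : (S + e1) * (h * N + Dn * (e2 * h)) = ((S + e1) * (N + Dn * e2)) * h) by ring.
      assert (HH3 : ((S + e1) * (N + Dn * e2)) * h <= (S * N + eps / 2) * h) by (apply Rmult_le_compat_r; lra).
      unfold K. unfold h in *. lra. }
    unfold K in HK. assert (F a = 0) by (unfold F; rewrite RInt_point; reflexivity). nra. }
  assert (Fb : F b = RInt f a b).
  { unfold F. apply RInt_ext. intros x Hx. rewrite Rmin_left, Rmax_right in Hx by lra.
    unfold ft. rewrite clamp_id by lra. auto. }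
  rewrite <- Fb. apply Rnot_lt_le. intros Hlt.
  set (eps := (Phi (g b) - Phi (g a) - F b) / (2 * (b - a))).
  assert (Heps : 0 < eps) by (unfold eps; apply Rdiv_lt_0_compat; lra).
  specialize (Main eps Heps).
  assert (eps * (b - a) = (Phi (g b) - Phi (g a) - F b) / 2) by (unfold eps; field; lra).
  lra.
Qed.

Lemma psum_tele n (h : nat -> R) : psum n (fun k => h (S k) - h k) = h n - h O.
Proof. induction n; simpl; [ring|]. rewrite IHn. ring. Qed.

Lemma psum_le n f g : (forall k, (k < n)%nat -> f k <= g k) -> psum n f <= psum n g.
Proof.
  induction n; intros H; simpl; [lra|].
  specialize (IHn ltac:(intros; apply H; lia)). specialize (H n ltac:(lia)). lra.
Qed.

Lemma AL_eq d s L Phi z w : AL d s L Phi -> (forall i, (i < d)%nat -> z i = w i) -> Phi z = Phi w.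
Proof.
  intros H Hzw. destruct (H w 1 ltac:(lra)) as [del [Hd H1]].
  assert (E : enorm d (psub z w) = 0) by (apply enorm_zero; intros; unfold psub; rewrite Hzw; auto; ring).
  specialize (H1 z ltac:(lra)). rewrite E, Rmult_0_r in H1.
  apply Rabs_le_between in H1. lra.
Qed.

Lemma path_bound d s L Phi x y g Dg t n : (1 <= d)%nat -> 2 <= s -> AL d s L Phi ->
  pw_C1_path d x y g Dg t n -> Phi y - Phi x <= agmon_length d s L g Dg t n.
Proof.
  intros Hd Hs HAL [Hend [Ht0 [Htn [Hinc [Hgc Hp]]]]].
  assert (Mono : forall j k, (k + j <= n)%nat -> t k <= t (k + j)%nat).
  { induction j; intros k Hk. rewrite Nat.add_0_r; lra.
    rewrite Nat.add_succ_r. specialize (IHj k ltac:(lia)). specialize (Hinc (k + j)%nat ltac:(lia)). lra. }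
  assert (Bd : forall k, (k <= n)%nat -> 0 <= t k <= 1).
  { intros k Hk. split.
    - rewrite <- Ht0. apply (Mono k 0%nat). lia.
    - assert (HH := Mono (n - k)%nat k ltac:(lia)). replace (k + (n - k))%nat with n in HH by lia. lra. }
  rewrite (AL_eq d s L Phi y (g 1) HAL) by (intros i Hi; symmetry; apply Hend; auto).
  rewrite (AL_eq d s L Phi x (g 0) HAL) by (intros i Hi; symmetry; apply Hend; auto).
  replace (Phi (g 1) - Phi (g 0)) with (Phi (g (t n)) - Phi (g (t 0%nat))) by (rewrite Htn, Ht0; auto).
  rewrite <- (psum_tele n (fun k => Phi (g (t k)))).
  unfold agmon_length. apply psum_le. intros k Hk.
  pose proof (Bd k ltac:(lia)). pose proof (Bd (S k) ltac:(lia)). pose proof (Hinc k Hk).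
  apply piece; auto.
  - intros i Hi. apply (ccont_sub 0 1); try lra. apply ccont_of_cont_on. apply Hgc; auto.
  - intros i Hi. apply ccont_of_cont_on. apply (Hp k i Hk Hi).
  - intros i u Hi Hu. apply (Hp k i Hk Hi). auto.
Qed.

Lemma lb_apply d s L Phi x y v : (1 <= d)%nat -> 2 <= s -> AL d s L Phi ->
  v = Phi y - Phi x -> Rbar_le (Finite v) (dDW d s L x y).
Proof.
  intros Hd Hs HAL Hv. unfold dDW.
  destruct (Glb_Rbar_correct (fun l => exists g Dg t n,
     pw_C1_path d x y g Dg t n /\ l = agmon_length d s L g Dg t n)) as [_ Hglb].
  apply Hglb. intros l [g [Dg [t [n [Hp Hl]]]]]. subst l v. simpl.
  apply (path_bound d s L Phi x y g Dg t n); auto.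
Qed.

Lemma rho_xw d L : (1 <= d)%nat -> 0 < L -> rho d L (xw L) = 0.
Proof.
  intros Hd HL. rewrite rho_right; auto. apply enorm_zero. intros; unfold psub; ring.
  unfold xw; simpl; lra.
Qed.

Lemma rho_mxw d L : (1 <= d)%nat -> 0 < L -> rho d L (popp (xw L)) = 0.
Proof.
  intros Hd HL. rewrite rho_left; auto. apply enorm_zero. intros; unfold padd, popp; ring.
  unfold popp, xw; simpl; lra.
Qed.

Lemma e1_hi x1 i : (1 <= i)%nat -> e1 x1 i = 0.
Proof. intros. unfold e1. destruct i. lia. reflexivity. Qed.
Lemma xw_hi L i : (1 <= i)%nat -> xw L i = 0.
Proof. intros. unfold xw. destruct i. lia. reflexivity. Qed.

Lemma enorm_e1_sub d L x1 : (1 <= d)%nat -> enorm d (psub (e1 x1) (xw L)) = Rabs (x1 - L/2).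
Proof.
  intros Hd. rewrite enorm_only0; auto.
  intros i Hi. unfold psub. rewrite e1_hi, xw_hi by auto. ring.
Qed.

Lemma enorm_e1_add d L x1 : (1 <= d)%nat -> enorm d (padd (e1 x1) (xw L)) = Rabs (x1 + L/2).
Proof.
  intros Hd. rewrite enorm_only0; auto.
  intros i Hi. unfold padd. rewrite e1_hi, xw_hi by auto. ring.
Qed.

Lemma e1_0 x1 : e1 x1 0%nat = x1.
Proof. reflexivity. Qed.

Theorem lemma5p1 (d : nat) (s L c : R)
  (hd : (1 <= d)%nat) (hs : 2 <= s) (hL : 0 < L) (hc : 0 < c) :
  (* (i) *)
  (forall x : pt, 0 <= x 0%nat ->
     Rbar_le (Finite (Afun s (enorm d (psub x (xw L))))) (dDW d s L x (xw L))) /\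
  (forall x : pt, x 0%nat <= 0 ->
     Rbar_le (Finite (Afun s (enorm d (padd x (xw L))))) (dDW d s L x (popp (xw L)))) /\
  (* (ii) *)
  (forall x1 : R, 0 <= x1 ->
     Rbar_le (Finite (Afun s (Rabs (x1 - L / 2)))) (dDW d s L (e1 x1) (xw L))) /\
  (forall x1 : R, - L / 2 + c <= x1 <= 0 ->
     Rbar_le (Finite (2 * Afun s (L / 2) - Afun s (Rabs (L / 2 + x1))))
             (dDW d s L (e1 x1) (xw L))) /\
  (forall x1 : R, x1 <= 0 ->
     Rbar_le (Finite (Afun s (Rabs (x1 + L / 2)))) (dDW d s L (e1 x1) (popp (xw L)))) /\
  (forall x1 : R, 0 <= x1 <= L / 2 - c ->
     Rbar_le (Finite (2 * Afun s (L / 2) - Afun s (Rabs (L / 2 - x1))))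
             (dDW d s L (e1 x1) (popp (xw L)))) /\
  (* (iii) *)
  (forall x : pt, - L / 2 + c <= x 0%nat <= 0 ->
     Rbar_le (Finite (2 * Afun s (L / 2) - Afun s (Rabs (L / 2 + x 0%nat))))
             (dDW d s L x (xw L))) /\
  (forall x : pt, 0 <= x 0%nat <= L / 2 - c ->
     Rbar_le (Finite (2 * Afun s (L / 2) - Afun s (Rabs (L / 2 - x 0%nat))))
             (dDW d s L x (popp (xw L)))).
Proof.
  pose proof (AL_opp d s L _ (AL_psi d s L hs)) as Hpsi.
  assert (P1 : forall x : pt, 0 <= x 0%nat ->
     Rbar_le (Finite (Afun s (enorm d (psub x (xw L))))) (dDW d s L x (xw L))).
  { intros x Hx. apply (lb_apply d s L _ x (xw L) _ hd hs Hpsi).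
    rewrite rho_xw, Afun_0, (rho_right d L x) by auto. ring. }
  assert (P2 : forall x : pt, x 0%nat <= 0 ->
     Rbar_le (Finite (Afun s (enorm d (padd x (xw L))))) (dDW d s L x (popp (xw L)))).
  { intros x Hx. apply (lb_apply d s L _ x (popp (xw L)) _ hd hs Hpsi).
    rewrite rho_mxw, Afun_0, (rho_left d L x) by auto. ring. }
  assert (P3 : forall x : pt, - L / 2 + c <= x 0%nat <= 0 ->
     Rbar_le (Finite (2 * Afun s (L / 2) - Afun s (Rabs (L / 2 + x 0%nat))))
             (dDW d s L x (xw L))).
  { intros x Hx. apply (lb_apply d s L _ x (xw L) _ hd hs (AL_Theta d s L hd hs hL)).
    unfold T1, T2.
    rewrite (enorm_zero d (psub (xw L) (xw L))) by (intros; unfold psub; ring).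
    rewrite Afun_0. change (xw L 0%nat) with (L/2).
    rewrite (Rabs_pos_eq (L/2 + L/2)) by lra. rewrite (Rmin_right (L/2 + L/2)) by lra.
    rewrite (Rmin_left (Rabs (x 0%nat + L/2))) by (rewrite Rabs_pos_eq; lra).
    assert (Afun s (L/2) <= Afun s (enorm d (psub x (xw L)))).
    { apply Afun_mono. lra. split. lra.
      eapply Rle_trans; [|apply (enorm_ge_0 d _ hd)]. rewrite psub_xw0. rewrite Rabs_left1; lra. }
    rewrite (Rmax_left 0 (Afun s (L / 2) - Afun s (enorm d (psub x (xw L))))) by lra.
    rewrite (Rmax_right 0 (Afun s (L / 2) - 0)).
    rewrite (Rplus_comm (x 0%nat) (L/2)). ring.
    pose proof (Afun_mono s 0 (L/2) ltac:(lra) ltac:(lra)). rewrite Afun_0 in H0. lra. }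
  assert (P4 : forall x : pt, 0 <= x 0%nat <= L / 2 - c ->
     Rbar_le (Finite (2 * Afun s (L / 2) - Afun s (Rabs (L / 2 - x 0%nat))))
             (dDW d s L x (popp (xw L)))).
  { intros x Hx. apply (lb_apply d s L _ x (popp (xw L)) _ hd hs (AL_Theta' d s L hd hs hL)).
    unfold T1', T2'.
    rewrite (enorm_zero d (padd (popp (xw L)) (xw L))) by (intros; unfold padd, popp; ring).
    rewrite Afun_0. change (popp (xw L) 0%nat) with (- (L/2)).
    rewrite (Rabs_left1 (- (L/2) - L/2)) by lra. rewrite (Rmin_right (- (- (L/2) - L/2))) by lra.
    rewrite (Rmin_left (Rabs (x 0%nat - L/2))) by (rewrite Rabs_left1; lra).
    assert (Afun s (L/2) <= Afun s (enorm d (padd x (xw L)))).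
    { apply Afun_mono. lra. split. lra.
      eapply Rle_trans; [|apply (enorm_ge_0 d _ hd)]. rewrite padd_xw0. rewrite Rabs_pos_eq; lra. }
    rewrite (Rmax_left 0 (Afun s (L / 2) - Afun s (enorm d (padd x (xw L))))) by lra.
    rewrite (Rmax_right 0 (Afun s (L / 2) - 0)).
    rewrite (Rabs_minus_sym (x 0%nat) (L/2)). ring.
    pose proof (Afun_mono s 0 (L/2) ltac:(lra) ltac:(lra)). rewrite Afun_0 in H0. lra. }
  split; [exact P1|]. split; [exact P2|].
  split. { intros x1 Hx1. rewrite <- (enorm_e1_sub d L x1 hd). apply P1. auto. }
  split. { intros x1 Hx1. apply P3. auto. }
  split. { intros x1 Hx1. rewrite <- (enorm_e1_add d L x1 hd). apply P2. auto. }
  split. { intros x1 Hx1. apply P4. auto. }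
  split; auto.
Qed.
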